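(* Let $k\ge 2$ and let $\mathcal{C}$ be the full flag code on $\mathbb{F}_q^{2k}$ constructed from a $k$-spread as described in the context. Let $\mathcal{F}=(\mathcal{F}_1,\ldots,\mathcal{F}_{2k-1})\in\mathcal{C}$ and let $\mathcal{X}=(\mathcal{X}_1,\ldots,\mathcal{X}_{2k-1})$ be a sequence of subspaces with $\mathcal{X}_i\subseteq\mathcal{F}_i$ for all $i$. If there exists $i\in\{1,\ldots,k\}$ with $\mathcal{X}_i\ne\{0\}$, then $\mathcal{F}$ is the unique flag $\mathcal{G}=(\mathcal{G}_1,\ldots,\mathcal{G}_{2k-1})\in\mathcal{C}$ with $\mathcal{X}_i\subseteq\mathcal{G}_i$.
   Context: $q$ is a prime power. Construction: let $\{\mathcal{S}_1,\ldots,\mathcal{S}_{q^k+1}\}$ be a $k$-spread of $\mathbb{F}_q^{2k}$ (a set of $q^k+1$ $k$-dimensional subspaces pairwise intersecting trivially), with full-rank $k\times 2k$ generator matrices $\mathrm{S}_i$ (row space $\mathcal{S}_i$). Let $\mathrm{W}_i=\begin{pmatrix}\mathrm{S}_i\\ \mathrm{S}_{i+1}\end{pmatrix}$ for $i\le q^k$ and $\mathrm{W}_{q^k+1}=\begin{pmatrix}\mathrm{S}_{q^k+1}\\ \mathrm{S}_1\end{pmatrix}$, let $\mathcal{W}_i^{(j)}$ be the row space of the first $j$ rows of $\mathrm{W}_i$, and $\mathcal{C}=\{(\mathcal{W}_i^{(1)},\ldots,\mathcal{W}_i^{(2k-1)}): 1\le i\le q^k+1\}$. *)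

(* Defs.v *)
(* Subspaces of F^(2k) are represented by matrices over F
   (row spaces), with inclusion (A <= B)%MS and canonical representatives
   <<A>>%MS. *)
From HB Require Import structures.
From mathcomp Require Import all_boot all_order all_algebra all_field.
Set Implicit Arguments. Unset Strict Implicit. Unset Printing Implicit Defensive.
Import GRing.Theory.
Local Open Scope ring_scope.

(* A k-spread of F^(2k) given by generator matrices S_i (k x 2k), indexed by
   'I_(q^k+1) with q = #|F|: each S_i is full rank (so its row space has
   dimension k) and the row spaces pairwise intersect trivially. *)
Definition is_spread_gen (F : finFieldType) (k : nat)
    (S : 'I_(#|F| ^ k).+1 -> 'M[F]_(k, k + k)) : Prop :=
  (forall i, row_free (S i)) /\
  (forall i j, i != j -> (S i :&: S j)%MS = 0 :> 'M[F]_(k + k)).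

(* W_i = (S_i ; S_(i+1)), cyclically (W_(q^k+1) = (S_(q^k+1) ; S_1)). *)
Definition Wmx (F : finFieldType) (k : nat)
    (S : 'I_(#|F| ^ k).+1 -> 'M[F]_(k, k + k)) (i : 'I_(#|F| ^ k).+1)
    : 'M[F]_(k + k, k + k) :=
  col_mx (S i) (S (ordS i)).

(* W_i^(j): the row space of the first j rows of W_i (the other rows are
   zeroed out by the partial identity pid_mx j), as a canonical subspace. *)
Definition flagW (F : finFieldType) (k : nat)
    (S : 'I_(#|F| ^ k).+1 -> 'M[F]_(k, k + k)) (i : 'I_(#|F| ^ k).+1)
    (j : nat) : 'M[F]_(k + k) :=
  (<< (pid_mx j : 'M[F]_(k + k)) *m Wmx S i >>)%MS.

(* Main.v *)
Require Import Defs.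
From mathcomp Require Import all_boot all_order all_algebra all_field.
Local Open Scope ring_scope.
Import GRing.Theory.

Lemma flag_sub (F : finFieldType) (k : nat)
    (S : 'I_(#|F| ^ k).+1 -> 'M[F]_(k, k + k)) i j :
  (j <= k)%N -> (flagW S i j <= S i)%MS.
Proof.
move=> hj; rewrite /flagW genmxE /Wmx.
have -> : (pid_mx j : 'M[F]_(k + k)) =
   (pid_mx j : 'M[F]_(k + k, k + k)) *m ((pid_mx k : 'M[F]_(k + k, k)) *m (pid_mx k : 'M[F]_(k, k + k))).
  rewrite !mul_pid_mx minnn (minn_idPr _) ?leq_addr //.
  by rewrite minnn (minn_idPl hj).
  by rewrite minnn (minn_idPl hj) (leq_trans hj) ?leq_addr.
rewrite (@pid_mx_row F k k).
by rewrite -!mulmxA mul_row_col mul1mx mul0mx addr0 mulmxA submxMl.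
Qed.

Theorem proposition4p11 (F : finFieldType) (k : nat) (hk : (2 <= k)%N)
    (S : 'I_(#|F| ^ k).+1 -> 'M[F]_(k, k + k))
    (hS : is_spread_gen S)
    (i0 : 'I_(#|F| ^ k).+1) (X : nat -> 'M[F]_(k + k))
    (hX : forall j, (1 <= j <= (k + k).-1)%N -> (X j <= flagW S i0 j)%MS)
    (hnz : exists2 j, (1 <= j <= k)%N & X j != 0) :
  forall i : 'I_(#|F| ^ k).+1,
    (forall j, (1 <= j <= (k + k).-1)%N -> (X j <= flagW S i j)%MS) ->
    forall j, (1 <= j <= (k + k).-1)%N -> flagW S i j = flagW S i0 j.
Proof.
move=> i hXi j _.
case: (eqVneq i i0) => [-> //|ne].
case: hnz => l /andP[l1 lk] nz.
have hl : (1 <= l <= (k + k).-1)%N.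
  by rewrite l1 /=; move: hk lk; clear; case: k => // k' _ lk; rewrite addSn /=; apply: leq_trans lk (leq_addl _ _).
have h1 := submx_trans (hXi l hl) (@flag_sub F k S i l lk).
have h2 := submx_trans (hX l hl) (@flag_sub F k S i0 l lk).
have : (X l <= S i :&: S i0)%MS by rewrite sub_capmx h1 h2.
by rewrite (proj2 hS _ _ ne) submx0 (negbTE nz).
Qed.
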